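(* Let the language $\mathcal{L}(\Rightarrow)$, Yalcin's semantics, validity, informational consequence and the Yalcin logic be as described in the context. Then the set of formulas of $\mathcal{L}(\Rightarrow)$ that are valid according to Yalcin's semantics is exactly the Yalcin logic. Moreover, for all formulas $\sigma_1,\dots,\sigma_n,\varphi$ of $\mathcal{L}(\Rightarrow)$, $\varphi$ is an informational consequence of $\{\sigma_1,\dots,\sigma_n\}$ if and only if $(\Box\sigma_1\wedge\dots\wedge\Box\sigma_n)\to\Box\varphi$ is a theorem of the Yalcin logic.
   Context: The language $\mathcal{L}(\Rightarrow)$ is given by $\varphi::= p\mid \neg\varphi\mid (\varphi\wedge\varphi)\mid \Box\varphi \mid (\varphi\Rightarrow\varphi)$, where $p$ ranges over a fixed set of propositional variables; $\vee,\to,\leftrightarrow,\bot$ are defined as usual and $\Diamond\varphi:=\neg\Box\neg\varphi$. $\mathcal{L}$ is the set of formulas not containing $\Rightarrow$; a formula is nonmodal if it is in $\mathcal{L}$ and contains no $\Box$. A model is $\mathcal{M}=\langle W,V\rangle$ with $W$ a nonempty set and $V$ assigning to each propositional variable a subset of $W$. Yalcin's semantics evaluates formulas at $\mathcal{M},w,X$ with $w\in W$ and $X\subseteq W$ (an information state): $\mathcal{M},w,X\vDash p$ iff $w\in V(p)$; negation and conjunction are Boolean; $\mathcal{M},w,X\vDash\Box\varphi$ iff $\mathcal{M},v,X\vDash\varphi$ for all $v\in X$; $\mathcal{M},w,X\vDash\varphi\Rightarrow\psi$ iff $\mathcal{M},w,\llbracket\varphi\rrbracket^{\mathcal{M},X}\vDash\Box\psi$,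 where $\llbracket\varphi\rrbracket^{\mathcal{M},X}=\{v\in X\mid \mathcal{M},v,X\vDash\varphi\}$. A formula is valid iff it is true at every $w$ relative to every $X\subseteq W$ in every model. $\mathcal{M},X\vDash\varphi$ means $\mathcal{M},w,X\vDash\varphi$ for all $w\in X$; $\varphi$ is an informational consequence of a set $\Sigma$ iff for every model $\mathcal{M}$ and every $X\subseteq W$, if $\mathcal{M},X\vDash\sigma$ for all $\sigma\in\Sigma$ then $\mathcal{M},X\vDash\varphi$. The Yalcin logic is the smallest set of $\mathcal{L}(\Rightarrow)$ formulas closed under replacement of equivalents (if $\alpha\leftrightarrow\beta$ is in the set and $\varphi'$ results from $\varphi$ by replacing an occurrence of $\alpha$ by $\beta$, then $\varphi\leftrightarrow\varphi'$ is in the set), modus ponens for $\to$, and necessitation for $\Box$ (from $\varphi$ infer $\Box\varphi$), and containing all substitution instances of propositional tautologies and all instances of: K: $\Box(\varphi\to\psi)\to(\Box\varphi\to\Box\psi)$; 4: $\Diamond\Diamond\varphi\to\Diamond\varphi$; 5: $\Diamond\Box\varphi\to\Box\varphi$; I1: $(\varphi\Rightarrow\pi)\leftrightarrow\Box(\varphi\to\pi)$ for $\pi$ nonmodal; I2: $(\varphi\Rightarrow(\alpha\wedge\beta))\leftrightarrow((\varphi\Rightarrow\alpha)\wedge(\varphi\Rightarrow\beta))$; I3: $(\varphi\Rightarrow\alpha)\to(\varphi\Rightarrow(\alpha\vee\beta))$; I4: $(\varphi\Rightarrow\alpha)\to(\varphi\Rightarrow\Box\alpha)$; I5: $((\varphi\Rightarrow(\alpha\vee\Box\beta))\wedge\neg(\varphi\Rightarrow\beta))\to(\varphi\Rightarrow\alpha)$;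 I6: $((\varphi\Rightarrow(\alpha\vee\Diamond\beta))\wedge(\varphi\Rightarrow\neg\beta))\to(\varphi\Rightarrow\alpha)$; I7: $\neg(\varphi\Rightarrow\beta)\to(\varphi\Rightarrow\Diamond\neg\beta)$. *)

(* Defs.v *)
From Stdlib Require Import List.
Import ListNotations.

Inductive form : Type :=
| Var : nat -> form
| Neg : form -> form
| And : form -> form -> form
| Box : form -> form
| Cond : form -> form -> form.

Definition Or (a b : form) : form := Neg (And (Neg a) (Neg b)).
Definition Imp (a b : form) : form := Neg (And a (Neg b)).
Definition Iff (a b : form) : form := And (Imp a b) (Imp b a).
Definition Bot : form := And (Var 0) (Neg (Var 0)).
Definition Top : form := Neg Bot.
Definition Dia (a : form) : form := Neg (Box (Neg a)).

Fixpoint nonmodal (f : form) : Prop :=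
  match f with
  | Var _ => True
  | Neg a => nonmodal a
  | And a b => nonmodal a /\ nonmodal b
  | Box _ => False
  | Cond _ _ => False
  end.

(* Yalcin's semantics. A model is (W, V) with W nonempty; X is an info state. *)
Fixpoint sat {W : Type} (V : nat -> W -> Prop) (f : form) (X : W -> Prop) (w : W)
  : Prop :=
  match f with
  | Var p => V p w
  | Neg a => ~ sat V a X w
  | And a b => sat V a X w /\ sat V b X w
  | Box a => forall v, X v -> sat V a X v
  | Cond a b =>
      let Y := fun v => X v /\ sat V a X v in
      forall v, Y v -> sat V b Y v
  end.

Definition valid (f : form) : Prop :=
  forall (W : Type) (V : nat -> W -> Prop) (X : W -> Prop) (w : W),
    sat V f X w.

Definition sat_state {W : Type} (V : nat -> W -> Prop) (X : W -> Prop) (f : form)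
  : Prop := forall w, X w -> sat V f X w.

Definition inf_cons (S : list form) (f : form) : Prop :=
  forall (W : Type) (V : nat -> W -> Prop) (X : W -> Prop),
    inhabited W ->
    (forall s, In s S -> sat_state V X s) -> sat_state V X f.

Inductive pform : Type :=
| PVar : nat -> pform
| PNeg : pform -> pform
| PAnd : pform -> pform -> pform.

Fixpoint peval (v : nat -> bool) (p : pform) : bool :=
  match p with
  | PVar n => v n
  | PNeg a => negb (peval v a)
  | PAnd a b => andb (peval v a) (peval v b)
  end.

Definition tautology (p : pform) : Prop := forall v, peval v p = true.

Fixpoint psubst (s : nat -> form) (p : pform) : form :=
  match p with
  | PVar n => s n
  | PNeg a => Neg (psubst s a)
  | PAnd a b => And (psubst s a) (psubst s b)
  end.

Inductive replace (a b : form) : form -> form -> Prop :=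
| rep_here : replace a b a b
| rep_neg : forall f f', replace a b f f' -> replace a b (Neg f) (Neg f')
| rep_andl : forall f f' g, replace a b f f' -> replace a b (And f g) (And f' g)
| rep_andr : forall f g g', replace a b g g' -> replace a b (And f g) (And f g')
| rep_box : forall f f', replace a b f f' -> replace a b (Box f) (Box f')
| rep_condl : forall f f' g, replace a b f f' -> replace a b (Cond f g) (Cond f' g)
| rep_condr : forall f g g', replace a b g g' -> replace a b (Cond f g) (Cond f g').

Inductive yalcin : form -> Prop :=
| Y_taut : forall p s, tautology p -> yalcin (psubst s p)
| Y_K : forall f g, yalcin (Imp (Box (Imp f g)) (Imp (Box f) (Box g)))
| Y_4 : forall f, yalcin (Imp (Dia (Dia f)) (Dia f))
| Y_5 : forall f, yalcin (Imp (Dia (Box f)) (Box f))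
| Y_I1 : forall f p, nonmodal p -> yalcin (Iff (Cond f p) (Box (Imp f p)))
| Y_I2 : forall f a b,
    yalcin (Iff (Cond f (And a b)) (And (Cond f a) (Cond f b)))
| Y_I3 : forall f a b, yalcin (Imp (Cond f a) (Cond f (Or a b)))
| Y_I4 : forall f a, yalcin (Imp (Cond f a) (Cond f (Box a)))
| Y_I5 : forall f a b,
    yalcin (Imp (And (Cond f (Or a (Box b))) (Neg (Cond f b))) (Cond f a))
| Y_I6 : forall f a b,
    yalcin (Imp (And (Cond f (Or a (Dia b))) (Cond f (Neg b))) (Cond f a))
| Y_I7 : forall f b, yalcin (Imp (Neg (Cond f b)) (Cond f (Dia (Neg b))))
| Y_RE : forall a b f f', yalcin (Iff a b) -> replace a b f f' -> yalcin (Iff f f')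
| Y_MP : forall f g, yalcin (Imp f g) -> yalcin f -> yalcin g
| Y_Nec : forall f, yalcin f -> yalcin (Box f).

Fixpoint bigAnd (l : list form) : form :=
  match l with
  | [] => Top
  | [a] => a
  | a :: l' => And a (bigAnd l')
  end.

(* Main.v *)
Require Import Defs.
From Stdlib Require Import List Bool Classical ClassicalEpsilon.
Import ListNotations.

Fixpoint beval (e : form -> bool) (f : form) : bool :=
  match f with
  | Neg a => negb (beval e a)
  | And a b => beval e a && beval e b
  | _ => e f
  end.

Definition form_eq_dec : forall x y : form, {x = y} + {x <> y}.
Proof. decide equality; apply PeanoNat.Nat.eq_dec. Defined.

Fixpoint atoms (f : form) : list form :=
  match f with Neg a => atoms a | And a b => atoms a ++ atoms b | _ => [f] end.

Fixpoint idx (a : form) (l : list form) : nat :=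
  match l with [] => 0 | x :: l' => if form_eq_dec x a then 0 else S (idx a l') end.

Lemma nth_idx : forall a l, In a l -> nth (idx a l) l Top = a.
Proof.
  intros a l; induction l as [|x l IH]; simpl; intros H; [contradiction|].
  destruct (form_eq_dec x a); [assumption|]. destruct H; [congruence|auto].
Qed.

Fixpoint abs (l : list form) (f : form) : pform :=
  match f with
  | Neg a => PNeg (abs l a)
  | And a b => PAnd (abs l a) (abs l b)
  | _ => PVar (idx f l) end.

Lemma psubst_abs : forall l f, incl (atoms f) l ->
  psubst (fun n => nth n l Top) (abs l f) = f.
Proof.
  intros l f; induction f; simpl; intros H;
  try (apply nth_idx; apply H; simpl; auto; fail).
  - rewrite IHf; auto.
  - rewrite IHf1, IHf2; auto; intros x Hx; apply H; apply in_or_app; auto.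
Qed.

Lemma peval_abs : forall v l f, peval v (abs l f) = beval (fun g => v (idx g l)) f.
Proof. intros v l f; induction f; simpl; congruence. Qed.

Lemma PL0 : forall f, (forall e, beval e f = true) -> yalcin f.
Proof.
  intros f H. rewrite <- (psubst_abs (atoms f) f) by apply incl_refl.
  apply Y_taut. intro v. rewrite peval_abs. apply H.
Qed.

Lemma PLH : forall H f, Forall yalcin H ->
  (forall e, Forall (fun h => beval e h = true) H -> beval e f = true) -> yalcin f.
Proof.
  induction H as [|h H IH]; intros f HH Hf.
  - apply PL0. intro e. apply Hf. constructor.
  - inversion HH; subst. apply (Y_MP h f); [| assumption].
    apply IH; [assumption|]. intros e He. unfold Imp. simpl.
    destruct (beval e h) eqn:E; simpl; [|reflexivity].
    rewrite (Hf e (Forall_cons _ E He)). reflexivity.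
Qed.

Ltac bcase :=
  unfold Imp, Iff, Or, Dia, Top, Bot in *;
  repeat (simpl in *; match goal with
  | e : form -> bool |- _ =>
     match goal with
     | H : context [beval e ?x] |- _ => destruct (beval e x)
     | H : context [e ?x] |- _ => destruct (e x)
     | |- context [beval e ?x] => destruct (beval e x)
     | |- context [e ?x] => destruct (e x)
     end
  end); try discriminate; try reflexivity.

Lemma PL1 : forall a f, yalcin a -> (forall e, beval e a = true -> beval e f = true) -> yalcin f.
Proof. intros a f Ha H. apply (PLH [a]); [repeat constructor; auto|].
  intros e He. inversion He; auto. Qed.
Lemma PL2 : forall a b f, yalcin a -> yalcin b ->
  (forall e, beval e a = true -> beval e b = true -> beval e f = true) -> yalcin f.
Proof. intros a b f Ha Hb H. apply (PLH [a;b]); [repeat constructor; auto|].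
  intros e He. inversion He; subst. inversion H3; auto. Qed.
Lemma PL3 : forall a b c f, yalcin a -> yalcin b -> yalcin c ->
  (forall e, beval e a = true -> beval e b = true -> beval e c = true -> beval e f = true) -> yalcin f.
Proof. intros a b c f Ha Hb Hc H. apply (PLH [a;b;c]); [repeat constructor; auto|].
  intros e He. inversion He; subst. inversion H3; subst. inversion H5; auto. Qed.
Lemma PL4 : forall a b c d f, yalcin a -> yalcin b -> yalcin c -> yalcin d ->
  (forall e, beval e a = true -> beval e b = true -> beval e c = true -> beval e d = true -> beval e f = true) -> yalcin f.
Proof. intros a b c d f Ha Hb Hc Hd H. apply (PLH [a;b;c;d]); [repeat constructor; auto|].
  intros e He. inversion He; subst. inversion H3; subst. inversion H5; subst. inversion H7; auto. Qed.

Lemma box_mono : forall a b, yalcin (Imp a b) -> yalcin (Imp (Box a) (Box b)).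
Proof. intros a b H. apply (Y_MP _ _ (Y_K a b)). apply Y_Nec, H. Qed.

Lemma box_iff : forall a b, yalcin (Iff a b) -> yalcin (Iff (Box a) (Box b)).
Proof.
  intros a b H.
  assert (H1 : yalcin (Imp a b)) by (apply (PL1 _ _ H); intros; bcase).
  assert (H2 : yalcin (Imp b a)) by (apply (PL1 _ _ H); intros; bcase).
  apply box_mono in H1; apply box_mono in H2.
  apply (PL2 _ _ _ H1 H2); intros; bcase.
Qed.

Lemma box_and : forall a b, yalcin (Imp (And (Box a) (Box b)) (Box (And a b))).
Proof.
  intros a b.
  assert (H0 : yalcin (Box (Imp a (Imp b (And a b))))) by (apply Y_Nec, PL0; intros; bcase).
  pose proof (Y_K a (Imp b (And a b))) as H1.
  pose proof (Y_K b (And a b)) as H2.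
  apply (PL3 _ _ _ _ H0 H1 H2); intros; bcase.
Qed.

Lemma box4 : forall a, yalcin (Imp (Box a) (Box (Box a))).
Proof.
  intros a. pose proof (Y_4 (Neg a)) as H. unfold Dia in H.
  assert (E1 : yalcin (Iff (Box a) (Box (Neg (Neg a))))) by (apply box_iff, PL0; intros; bcase).
  assert (E2 : yalcin (Iff (Box (Neg (Neg (Box (Neg (Neg a)))))) (Box (Box a)))).
  { apply box_iff. apply (PL1 _ _ E1); intros; bcase. }
  apply (PL3 _ _ _ _ H E1 E2); intros; bcase.
Qed.

Lemma box5 : forall a, yalcin (Imp (Neg (Box a)) (Box (Neg (Box a)))).
Proof. intros a. pose proof (Y_5 a) as H. unfold Dia in H. apply (PL1 _ _ H); intros; bcase. Qed.

Lemma cond_r_iff : forall c x y, yalcin (Iff x y) -> yalcin (Iff (Cond c x) (Cond c y)).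
Proof. intros. eapply Y_RE; [eassumption|]. apply rep_condr, rep_here. Qed.
Lemma cond_l_iff : forall c c' x, yalcin (Iff c c') -> yalcin (Iff (Cond c x) (Cond c' x)).
Proof. intros. eapply Y_RE; [eassumption|]. apply rep_condl, rep_here. Qed.

Lemma cond_and : forall c x y, yalcin (Imp (And (Cond c x) (Cond c y)) (Cond c (And x y))).
Proof. intros. pose proof (Y_I2 c x y) as H. apply (PL1 _ _ H); intros; bcase. Qed.

Lemma cond_mono : forall c x y, yalcin (Imp x y) -> yalcin (Imp (Cond c x) (Cond c y)).
Proof.
  intros c x y H.
  assert (E : yalcin (Iff x (And x y))) by (apply (PL1 _ _ H); intros; bcase).
  apply (cond_r_iff c) in E. pose proof (Y_I2 c x y) as H2.
  apply (PL2 _ _ _ E H2); intros; bcase.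
Qed.

Definition cnj (l : list form) : form := fold_right And Top l.
Definition bigOr (l : list form) : form := fold_right Or Bot l.

Lemma beval_cnj : forall e l, beval e (cnj l) = true <-> (forall x, In x l -> beval e x = true).
Proof.
  intros e l; induction l as [|a l IH]; simpl.
  - unfold Top, Bot; simpl. destruct (e (Var 0)); simpl; split; auto; intros; contradiction.
  - rewrite andb_true_iff, IH. split.
    + intros [H1 H2] x [<-|Hx]; auto.
    + intros H; split; auto.
Qed.

Lemma beval_bigOr : forall e l, beval e (bigOr l) = true <-> (exists x, In x l /\ beval e x = true).
Proof.
  intros e l; induction l as [|a l IH]; simpl.
  - unfold Bot; simpl. destruct (e (Var 0)); simpl; split; try discriminate; intros [x [[] _]].
  - change (beval e (Or a (bigOr l)) = true <-> (exists x, (a = x \/ In x l) /\ beval e x = true)).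
    unfold Or. simpl.
    destruct (beval e a) eqn:Ea; destruct (beval e (bigOr l)) eqn:Eb; simpl; split; intros H; auto;
    try discriminate.
    + exists a; auto.
    + exists a; auto.
    + destruct (proj1 IH eq_refl) as [x [Hx Hb]]. exists x; auto.
    + destruct H as [x [[<-|Hx] Hb]]; [congruence|]. exfalso.
      assert (false = true) by (apply IH; eauto). congruence.
Qed.

Lemma beval_Iff : forall e a b, beval e (Iff a b) = true <-> beval e a = beval e b.
Proof. intros. unfold Iff, Imp. simpl. destruct (beval e a), (beval e b); simpl; split; congruence. Qed.
Lemma beval_Imp : forall e a b, beval e (Imp a b) = true -> beval e a = true -> beval e b = true.
Proof. intros e a b. unfold Imp. simpl. destruct (beval e a), (beval e b); simpl; congruence. Qed.

Definition lit (p : form * bool) : form := let (x, b) := p in if b then Box x else Neg (Box x).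
Definition sigma (d : list (form * bool)) : form := cnj (map lit d).

Fixpoint lookup (x : form) (d : list (form * bool)) : option bool :=
  match d with
  | [] => None
  | (y, b) :: d' => if form_eq_dec y x then Some b else lookup x d'
  end.

Fixpoint inst (d : list (form * bool)) (g : form) : form :=
  match g with
  | Var n => Var n
  | Neg a => Neg (inst d a)
  | And a b => And (inst d a) (inst d b)
  | Box x => match lookup x d with Some true => Top | Some false => Bot | None => Box x end
  | Cond a b => Cond a b
  end.

Fixpoint matoms (g : form) : list form :=
  match g with
  | Neg a => matoms a
  | And a b => matoms a ++ matoms b
  | Box x => [x]
  | _ => []
  end.

Fixpoint d1 (g : form) : Prop :=
  match g with
  | Var _ => True
  | Neg a => d1 a
  | And a b => d1 a /\ d1 b
  | Box x => nonmodal x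
  | Cond _ _ => False
  end.

Lemma lookup_in : forall x d, In x (map fst d) -> exists b, lookup x d = Some b /\ In (x, b) d.
Proof.
  intros x d; induction d as [|[y b] d IH]; simpl; [contradiction|]. intros H.
  destruct (form_eq_dec y x) as [->|ne].
  - exists b; auto.
  - destruct H as [H|H]; [congruence|]. destruct (IH H) as [b' [H1 H2]]. exists b'; auto.
Qed.

Lemma sigma_in : forall e d x b, beval e (sigma d) = true -> In (x, b) d -> e (Box x) = b.
Proof.
  intros e d x b H Hin. unfold sigma in H. rewrite beval_cnj in H.
  specialize (H (lit (x, b)) (in_map lit _ _ Hin)). simpl in H.
  destruct b; simpl in H; [assumption|]. destruct (e (Box x)); simpl in *; congruence.
Qed.

Lemma inst_eval : forall e d g, beval e (sigma d) = true -> incl (matoms g) (map fst d) ->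
  beval e (inst d g) = beval e g.
Proof.
  intros e d g Hs; induction g; simpl; intros Hi; auto.
  - rewrite IHg; auto.
  - rewrite IHg1, IHg2; auto; intros y Hy; apply Hi, in_or_app; auto.
  - destruct (lookup_in g d) as [b [H1 H2]]; [apply Hi; simpl; auto|].
    rewrite H1. rewrite (sigma_in _ _ _ _ Hs H2).
    destruct b; unfold Top, Bot; simpl; destruct (e (Var 0)); reflexivity.
Qed.

Lemma nonmodal_Top : nonmodal Top. Proof. simpl; auto. Qed.
Lemma nonmodal_Bot : nonmodal Bot. Proof. simpl; auto. Qed.

Lemma inst_nonmodal : forall d g, d1 g -> incl (matoms g) (map fst d) -> nonmodal (inst d g).
Proof.
  intros d g; induction g; simpl; intros H Hi; auto.
  - destruct H; split; [apply IHg1|apply IHg2]; auto; intros y Hy; apply Hi, in_or_app; auto.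
  - destruct (lookup_in g d) as [b [H1 H2]]; [apply Hi; simpl; auto|].
    rewrite H1. destruct b; simpl; auto.
Qed.

Lemma sigma_inst_PL : forall d g, incl (matoms g) (map fst d) ->
  yalcin (Imp (sigma d) (Iff g (inst d g))).
Proof.
  intros d g Hi. apply PL0. intros e.
  assert (E2 : beval e (sigma d) = true -> beval e (Iff g (inst d g)) = true).
  { intros E. apply beval_Iff. symmetry. apply inst_eval; auto. }
  revert E2. generalize (Iff g (inst d g)). intros f E2.
  unfold Imp. simpl. destruct (beval e (sigma d)); simpl; [rewrite E2|]; auto.
Qed.

Lemma pl_const_and : forall L S, yalcin (Imp L (Box L)) -> yalcin (Imp S (Box S)) ->
  yalcin (Imp (And L S) (Box (And L S))).
Proof. intros L S H1 H2. pose proof (box_and L S) as H3. apply (PL3 _ _ _ _ H1 H2 H3); intros; bcase. Qed.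

Lemma box_Top : yalcin (Box Top).
Proof. apply Y_Nec, PL0; intros; bcase. Qed.

Lemma sigma_const : forall d, yalcin (Imp (sigma d) (Box (sigma d))).
Proof.
  induction d as [|[x b] d IH].
  - unfold sigma; simpl. apply (PL1 _ _ box_Top); intros; bcase.
  - unfold sigma; simpl. apply pl_const_and; [|apply IH].
    destruct b; [apply box4|apply box5].
Qed.

Lemma box_dist : forall g h, yalcin (Imp (Box (Iff g h)) (Iff (Box g) (Box h))).
Proof.
  intros g h.
  assert (H1 : yalcin (Imp (Box (Iff g h)) (Box (Imp g h)))) by (apply box_mono, PL0; intros; bcase).
  assert (H2 : yalcin (Imp (Box (Iff g h)) (Box (Imp h g)))) by (apply box_mono, PL0; intros; bcase).
  pose proof (Y_K g h). pose proof (Y_K h g).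
  apply (PL4 _ _ _ _ _ H1 H2 H H0); intros; bcase.
Qed.

Lemma sigma_box : forall d g, incl (matoms g) (map fst d) ->
  yalcin (Imp (sigma d) (Iff (Box g) (Box (inst d g)))).
Proof.
  intros d g Hi. pose proof (sigma_const d) as H1.
  pose proof (box_mono _ _ (sigma_inst_PL d g Hi)) as H2.
  pose proof (box_dist g (inst d g)) as H3.
  apply (PL3 _ _ _ _ H1 H2 H3); intros; bcase.
Qed.

Fixpoint allA (M : list form) : list (list (form * bool)) :=
  match M with
  | [] => [[]]
  | x :: M' => map (cons (x, true)) (allA M') ++ map (cons (x, false)) (allA M')
  end.

Lemma allA_fst : forall M d, In d (allA M) -> map fst d = M.
Proof.
  induction M as [|x M IH]; simpl; intros d H.
  - destruct H as [<-|[]]; reflexivity.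
  - apply in_app_or in H. destruct H as [H|H]; apply in_map_iff in H;
    destruct H as [d' [<- H]]; simpl; f_equal; auto.
Qed.

Lemma allA_in : forall (f : form -> bool) M, In (map (fun x => (x, f x)) M) (allA M).
Proof.
  intros f; induction M as [|x M IH]; simpl; auto.
  apply in_or_app. destruct (f x); [left|right]; apply in_map; auto.
Qed.

Lemma sigma_self : forall e M, beval e (sigma (map (fun x => (x, e (Box x))) M)) = true.
Proof.
  intros e M. unfold sigma. apply beval_cnj. intros y Hy.
  rewrite map_map in Hy. apply in_map_iff in Hy. destruct Hy as [x [<- _]]. simpl.
  destruct (e (Box x)) eqn:E; simpl; rewrite ?E; reflexivity.
Qed.

Definition rbox (g : form) : form :=
  bigOr (map (fun d => And (sigma d) (Box (inst d g))) (allA (matoms g))).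

Lemma rbox_correct : forall g, yalcin (Iff (Box g) (rbox g)).
Proof.
  intros g.
  apply (PLH (map (fun d => Imp (sigma d) (Iff (Box g) (Box (inst d g)))) (allA (matoms g)))).
  - apply Forall_forall. intros h Hh. apply in_map_iff in Hh. destruct Hh as [d [<- Hd]].
    apply sigma_box. rewrite (allA_fst _ _ Hd). apply incl_refl.
  - intros e He. rewrite Forall_forall in He.
    assert (Hd : forall d, In d (allA (matoms g)) -> beval e (sigma d) = true ->
                 e (Box g) = e (Box (inst d g))).
    { intros d Hd Hs. specialize (He _ (in_map (fun d => Imp (sigma d) (Iff (Box g) (Box (inst d g)))) _ _ Hd)).
      apply (beval_Iff e (Box g) (Box (inst d g))). apply (beval_Imp _ _ _ He Hs). }
    apply beval_Iff. simpl. unfold rbox.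
    set (d0 := map (fun x => (x, e (Box x))) (matoms g)).
    destruct (e (Box g)) eqn:E.
    + symmetry. apply beval_bigOr. exists (And (sigma d0) (Box (inst d0 g))). split.
      * apply (in_map (fun d => And (sigma d) (Box (inst d g)))). apply allA_in.
      * change (beval e (sigma d0) && e (Box (inst d0 g)) = true).
        rewrite (sigma_self e (matoms g) : beval e (sigma d0) = true). simpl.
        rewrite <- Hd; auto. apply allA_in. apply sigma_self.
    + destruct (beval e (bigOr _)) eqn:E2; [|reflexivity].
      apply beval_bigOr in E2. destruct E2 as [x [Hx Hb]].
      apply in_map_iff in Hx. destruct Hx as [d [<- Hd']]. simpl in Hb.
      apply andb_true_iff in Hb. destruct Hb as [Hb1 Hb2].
      rewrite <- (Hd d Hd' Hb1) in Hb2. congruence.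
Qed.

Lemma nonmodal_d1 : forall x, nonmodal x -> d1 x.
Proof. induction x; simpl; intuition. Qed.

Lemma d1_cnj : forall l, (forall x, In x l -> d1 x) -> d1 (cnj l).
Proof. induction l; simpl; intros H; [simpl; auto|]. split; auto. Qed.

Lemma d1_bigOr : forall l, (forall x, In x l -> d1 x) -> d1 (bigOr l).
Proof. induction l; simpl; intros H; [simpl; auto|]. unfold Or; simpl. split; auto. Qed.

Lemma d1_matoms : forall g, d1 g -> forall x, In x (matoms g) -> nonmodal x.
Proof.
  induction g; simpl; intros H x Hx; try contradiction; auto.
  - destruct H. apply in_app_or in Hx; destruct Hx; eauto.
  - destruct Hx as [<-|[]]; auto.
Qed.

Lemma d1_sigma : forall d, (forall x, In x (map fst d) -> nonmodal x) -> d1 (sigma d).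
Proof.
  intros d H. apply d1_cnj. intros y Hy. apply in_map_iff in Hy. destruct Hy as [[x b] [<- Hx]].
  assert (nonmodal x) by (apply H; apply (in_map fst _ _ Hx)).
  destruct b; simpl; auto.
Qed.

Lemma d1_rbox : forall g, d1 g -> d1 (rbox g).
Proof.
  intros g H. apply d1_bigOr. intros y Hy. apply in_map_iff in Hy. destruct Hy as [d [<- Hd]].
  pose proof (allA_fst _ _ Hd) as Hf. simpl. split.
  - apply d1_sigma. rewrite Hf. apply d1_matoms; auto.
  - apply inst_nonmodal; auto. rewrite Hf; apply incl_refl.
Qed.

Definition litc (a : form) (p : form * bool) : form :=
  let (x, b) := p in if b then rbox (Imp a x) else Neg (rbox (Imp a x)).
Definition litC (a : form) (p : form * bool) : form :=
  let (x, b) := p in if b then Cond a x else Neg (Cond a x).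

Definition rcond (a b : form) : form :=
  bigOr (map (fun d => And (cnj (map (litc a) d)) (rbox (Imp a (inst d b)))) (allA (matoms b))).

Lemma cond_Top : forall c, yalcin (Cond c Top).
Proof.
  intros c. pose proof (Y_I1 c Top nonmodal_Top) as H.
  assert (H2 : yalcin (Box (Imp c Top))) by (apply Y_Nec, PL0; intros; bcase).
  apply (PL2 _ _ _ H H2); intros; bcase.
Qed.

Lemma litC_step : forall c x b, yalcin (Imp (litC c (x, b)) (Cond c (lit (x, b)))).
Proof.
  intros c x [|]; simpl.
  - apply Y_I4.
  - pose proof (Y_I7 c x) as H.
    assert (H2 : yalcin (Imp (Dia (Neg x)) (Neg (Box x)))).
    { assert (H3 : yalcin (Imp (Box x) (Box (Neg (Neg x))))) by (apply box_mono, PL0; intros; bcase).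
      apply (PL1 _ _ H3); intros; bcase. }
    apply (cond_mono c) in H2.
    apply (PL2 _ _ _ H H2); intros; bcase.
Qed.

Lemma litC_cond : forall c d, yalcin (Imp (cnj (map (litC c) d)) (Cond c (sigma d))).
Proof.
  intros c; induction d as [|[x b] d IH].
  - simpl. unfold sigma; simpl. pose proof (cond_Top c) as H. apply (PL1 _ _ H); intros; bcase.
  - unfold sigma in *.
    change (yalcin (Imp (And (litC c (x, b)) (cnj (map (litC c) d))) (Cond c (And (lit (x, b)) (cnj (map lit d)))))).
    pose proof (litC_step c x b) as H1.
    pose proof (cond_and c (lit (x, b)) (cnj (map lit d))) as H2.
    revert H1 H2 IH. generalize (litC c (x, b)) (lit (x, b)) (cnj (map (litC c) d)) (cnj (map lit d)).
    intros A B C D H1 H2 H3. apply (PL3 _ _ _ _ H1 H2 H3); intros; bcase.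
Qed.

Lemma PL5 : forall a b c d g f, yalcin a -> yalcin b -> yalcin c -> yalcin d -> yalcin g ->
  (forall e, beval e a = true -> beval e b = true -> beval e c = true -> beval e d = true ->
     beval e g = true -> beval e f = true) -> yalcin f.
Proof. intros a b c d g f Ha Hb Hc Hd Hg H. apply (PLH [a;b;c;d;g]); [repeat constructor; auto|].
  intros e He. inversion He; subst. inversion H3; subst. inversion H5; subst. inversion H7; subst.
  inversion H9; auto. Qed.

Lemma cond_inst : forall c b d, incl (matoms b) (map fst d) ->
  yalcin (Imp (cnj (map (litC c) d)) (Iff (Cond c b) (Cond c (inst d b)))).
Proof.
  intros c b d Hi.
  pose proof (litC_cond c d) as H1.
  pose proof (sigma_inst_PL d b Hi) as H0.
  assert (H2 : yalcin (Imp (And (sigma d) b) (inst d b))) by (apply (PL1 _ _ H0); intros; bcase).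
  assert (H3 : yalcin (Imp (And (sigma d) (inst d b)) b)) by (apply (PL1 _ _ H0); intros; bcase).
  apply (cond_mono c) in H2. apply (cond_mono c) in H3.
  pose proof (cond_and c (sigma d) b) as H4.
  pose proof (cond_and c (sigma d) (inst d b)) as H5.
  revert H1 H2 H3 H4 H5. generalize (cnj (map (litC c) d)) (sigma d) (inst d b).
  intros L S b' H1 H2 H3 H4 H5.
  apply (PL5 _ _ _ _ _ _ H1 H2 H3 H4 H5); intros; bcase.
Qed.

Lemma litc_litC : forall e a d,
  (forall x, In x (map fst d) -> e (Cond a x) = beval e (rbox (Imp a x))) ->
  beval e (cnj (map (litc a) d)) = beval e (cnj (map (litC a) d)).
Proof.
  intros e a d; induction d as [|[x b] d IH]; intros H; [reflexivity|].
  change (beval e (litc a (x, b)) && beval e (cnj (map (litc a) d)) =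
          beval e (litC a (x, b)) && beval e (cnj (map (litC a) d))).
  rewrite IH by (intros y Hy; apply H; simpl; auto).
  f_equal. destruct b; simpl; rewrite H by (simpl; auto); reflexivity.
Qed.

Lemma litC_self : forall e a M, beval e (cnj (map (litC a) (map (fun x => (x, e (Cond a x))) M))) = true.
Proof.
  intros e a M. apply beval_cnj. intros y Hy.
  rewrite map_map in Hy. apply in_map_iff in Hy. destruct Hy as [x [<- _]]. simpl.
  destruct (e (Cond a x)) eqn:E; simpl; rewrite ?E; reflexivity.
Qed.

Lemma rcond_correct : forall a b, d1 a -> d1 b -> yalcin (Iff (Cond a b) (rcond a b)).
Proof.
  intros a b Ha Hb.
  set (M := matoms b).
  apply (PLH (map (fun x => Iff (Cond a x) (rbox (Imp a x))) M
           ++ map (fun d => Iff (Cond a (inst d b)) (rbox (Imp a (inst d b)))) (allA M)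
           ++ map (fun d => Imp (cnj (map (litC a) d)) (Iff (Cond a b) (Cond a (inst d b)))) (allA M))).
  - assert (Hgen : forall y, nonmodal y -> yalcin (Iff (Cond a y) (rbox (Imp a y)))).
    { intros y Hy. pose proof (Y_I1 a y Hy) as H1. pose proof (rbox_correct (Imp a y)) as H2.
      apply (PL2 _ _ _ H1 H2); intros; bcase. }
    apply Forall_app; split; [|apply Forall_app; split]; apply Forall_forall; intros h Hh;
    apply in_map_iff in Hh.
    + destruct Hh as [x [<- Hx]]. apply Hgen. apply (d1_matoms b Hb x Hx).
    + destruct Hh as [d [<- Hd]]. apply Hgen. apply inst_nonmodal; auto.
      rewrite (allA_fst _ _ Hd). apply incl_refl.
    + destruct Hh as [d [<- Hd]]. apply cond_inst. rewrite (allA_fst _ _ Hd). apply incl_refl.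
  - intros e He. rewrite Forall_forall in He.
    assert (H1 : forall x, In x M -> e (Cond a x) = beval e (rbox (Imp a x))).
    { intros x Hx. apply (beval_Iff e (Cond a x)). apply He. apply in_or_app; left.
      apply (in_map (fun x => Iff (Cond a x) (rbox (Imp a x)))); auto. }
    assert (H2 : forall d, In d (allA M) -> e (Cond a (inst d b)) = beval e (rbox (Imp a (inst d b)))).
    { intros d Hd. apply (beval_Iff e (Cond a (inst d b))). apply He. apply in_or_app; right.
      apply in_or_app; left.
      apply (in_map (fun d => Iff (Cond a (inst d b)) (rbox (Imp a (inst d b))))); auto. }
    assert (H3 : forall d, In d (allA M) -> beval e (cnj (map (litC a) d)) = true ->
                   e (Cond a b) = e (Cond a (inst d b))).
    { intros d Hd Hs. apply (beval_Iff e (Cond a b) (Cond a (inst d b))). refine (beval_Imp _ _ _ (He _ _) Hs).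
      apply in_or_app; right. apply in_or_app; right.
      apply (in_map (fun d => Imp (cnj (map (litC a) d)) (Iff (Cond a b) (Cond a (inst d b))))); auto. }
    assert (H4 : forall d, In d (allA M) ->
               beval e (cnj (map (litc a) d)) = beval e (cnj (map (litC a) d))).
    { intros d Hd. apply litc_litC. rewrite (allA_fst _ _ Hd). auto. }
    apply (beval_Iff e (Cond a b) (rcond a b)). simpl. unfold rcond. fold M.
    set (d0 := map (fun x => (x, e (Cond a x))) M).
    assert (Hd0 : In d0 (allA M)) by apply allA_in.
    destruct (e (Cond a b)) eqn:E.
    + symmetry. apply beval_bigOr.
      exists (And (cnj (map (litc a) d0)) (rbox (Imp a (inst d0 b)))). split.
      * apply (in_map (fun d => And (cnj (map (litc a) d)) (rbox (Imp a (inst d b))))). auto.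
      * change (beval e (cnj (map (litc a) d0)) && beval e (rbox (Imp a (inst d0 b))) = true).
        rewrite H4 by auto. rewrite (litC_self e a M : beval e (cnj (map (litC a) d0)) = true).
        simpl. rewrite <- H2 by auto. rewrite <- H3; auto. apply litC_self.
    + destruct (beval e (bigOr _)) eqn:E2; [|reflexivity].
      apply beval_bigOr in E2. destruct E2 as [x [Hx Hb']].
      apply in_map_iff in Hx. destruct Hx as [d [<- Hd']]. simpl in Hb'.
      apply andb_true_iff in Hb'. destruct Hb' as [Hb1 Hb2].
      rewrite H4 in Hb1 by auto. rewrite <- H2 in Hb2 by auto.
      rewrite <- (H3 d Hd' Hb1) in Hb2. congruence.
Qed.

Lemma d1_rcond : forall a b, d1 a -> d1 b -> d1 (rcond a b).
Proof.
  intros a b Ha Hb. apply d1_bigOr. intros y Hy. apply in_map_iff in Hy.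
  destruct Hy as [d [<- Hd]]. pose proof (allA_fst _ _ Hd) as Hf.
  assert (HI : forall x, nonmodal x -> d1 (Imp a x)).
  { intros x Hx. unfold Imp; simpl. split; auto. apply nonmodal_d1; auto. }
  simpl. split.
  - apply d1_cnj. intros z Hz. apply in_map_iff in Hz. destruct Hz as [[x bb] [<- Hx]].
    assert (nonmodal x).
    { apply (d1_matoms b Hb). rewrite <- Hf. apply (in_map fst _ _ Hx). }
    destruct bb; simpl; apply d1_rbox; auto.
  - apply d1_rbox, HI, inst_nonmodal; auto. rewrite Hf; apply incl_refl.
Qed.

Fixpoint red (f : form) : form :=
  match f with
  | Var n => Var n
  | Neg a => Neg (red a)
  | And a b => And (red a) (red b)
  | Box a => rbox (red a)
  | Cond a b => rcond (red a) (red b)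
  end.

Lemma d1_red : forall f, d1 (red f).
Proof.
  induction f; simpl; auto.
  - apply d1_rbox; auto.
  - apply d1_rcond; auto.
Qed.

Lemma red_correct : forall f, yalcin (Iff f (red f)).
Proof.
  induction f; simpl.
  - apply PL0; intros; bcase.
  - apply (PL1 _ _ IHf); intros; bcase.
  - apply (PL2 _ _ _ IHf1 IHf2); intros; bcase.
  - pose proof (box_iff _ _ IHf) as H1. pose proof (rbox_correct (red f)) as H2.
    apply (PL2 _ _ _ H1 H2); intros; bcase.
  - pose proof (cond_l_iff f1 (red f1) f2 IHf1) as H1.
    pose proof (cond_r_iff (red f1) f2 (red f2) IHf2) as H2.
    pose proof (rcond_correct (red f1) (red f2) (d1_red f1) (d1_red f2)) as H3.
    apply (PL3 _ _ _ _ H1 H2 H3); intros; bcase.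
Qed.

Fixpoint subs {A} (l : list A) : list (list A) :=
  match l with [] => [[]] | x :: l' => subs l' ++ map (cons x) (subs l') end.

Lemma filter_subs : forall {A} (p : A -> bool) l, In (filter p l) (subs l).
Proof.
  intros A p l; induction l as [|x l IH]; simpl; auto.
  apply in_or_app. destruct (p x); [right; apply in_map|left]; auto.
Qed.

Lemma cfilter : forall C : list form, exists H, Forall yalcin H /\
  forall c, In c C -> yalcin c -> In c H.
Proof.
  induction C as [|c C IH]; [exists []; split; [constructor|intros _ []]|].
  destruct IH as [H [H1 H2]]. destruct (classic (yalcin c)) as [Y|N].
  - exists (c :: H). split; [constructor; auto|]. intros x [<-|Hx] Hy; simpl; auto.
  - exists H. split; auto. intros x [<-|Hx] Hy; [contradiction|auto].
Qed.

Lemma box_cnj_gen : forall T y, yalcin (Imp (Box (Imp (cnj T) y)) (Imp (cnj (map Box T)) (Box y))).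
Proof.
  induction T as [|t T IH]; intros y.
  - simpl. assert (H : yalcin (Imp (Imp Top y) y)) by (apply PL0; intros; bcase).
    apply box_mono in H. apply (PL1 _ _ H); intros; bcase.
  - change (yalcin (Imp (Box (Imp (And t (cnj T)) y)) (Imp (And (Box t) (cnj (map Box T))) (Box y)))).
    assert (H : yalcin (Imp (Imp (And t (cnj T)) y) (Imp t (Imp (cnj T) y)))) by (apply PL0; intros; bcase).
    apply box_mono in H. pose proof (Y_K t (Imp (cnj T) y)) as H2. specialize (IH y).
    revert H H2 IH. generalize (cnj T) (cnj (map Box T)). intros C CB H1 H2 H3.
    apply (PL3 _ _ _ _ H1 H2 H3); intros; bcase.
Qed.

Definition cV (n : nat) (w : form -> bool) : Prop := w (Var n) = true.

Lemma nonmodal_truth : forall g, nonmodal g -> forall X w, sat cV g X w <-> beval w g = true.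
Proof.
  induction g; simpl; intros H X w; try contradiction.
  - unfold cV; tauto.
  - rewrite IHg by auto. destruct (beval w g); simpl; split; congruence.
  - destruct H. rewrite IHg1, IHg2 by auto. rewrite andb_true_iff; tauto.
Qed.

Lemma d1_complete : forall f, d1 f -> valid f -> yalcin f.
Proof.
  intros f Hd Hv.
  set (M := matoms f).
  set (C := flat_map (fun T => map (fun p => Imp (cnj (map Box T)) (Box p)) M) (subs M)).
  destruct (cfilter C) as [H [HH HC]].
  apply (PLH H f HH). intros e He. rewrite Forall_forall in He.
  set (T := filter (fun x => e (Box x)) M).
  set (X := fun w : form -> bool => forall t, In t T -> beval w t = true).
  assert (Hbox : forall x, In x M -> ((forall v, X v -> beval v x = true) <-> e (Box x) = true)).
  { intros x Hx. split.
    - intros Hall. apply NNPP. intros Hn.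
      assert (Y1 : yalcin (Imp (cnj T) x)).
      { apply PL0. intros v. unfold Imp; simpl.
        destruct (beval v (cnj T)) eqn:E; simpl; [|reflexivity].
        rewrite Hall; [reflexivity|]. exact (proj1 (beval_cnj v T) E). }
      apply Y_Nec in Y1. pose proof (Y_MP _ _ (box_cnj_gen T x) Y1) as Y2.
      assert (Hin : In (Imp (cnj (map Box T)) (Box x)) H).
      { apply HC; auto. apply in_flat_map. exists T. split; [apply filter_subs|].
        apply (in_map (fun p => Imp (cnj (map Box T)) (Box p))); auto. }
      apply Hn. apply (beval_Imp _ _ _ (He _ Hin)). apply beval_cnj.
      intros y Hy. apply in_map_iff in Hy. destruct Hy as [t [<- Ht]].
      unfold T in Ht. apply filter_In in Ht. apply Ht.
    - intros E v Xv. apply Xv. unfold T. apply filter_In; auto. }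
  assert (Htruth : forall g, d1 g -> incl (matoms g) M -> (sat cV g X e <-> beval e g = true)).
  { induction g; simpl; intros Hg Hi; try contradiction.
    - unfold cV; tauto.
    - rewrite IHg by auto. destruct (beval e g); simpl; split; congruence.
    - destruct Hg. rewrite IHg1, IHg2 by (auto; intros y Hy; apply Hi, in_or_app; auto).
      rewrite andb_true_iff; tauto.
    - assert (Hx : In g M) by (apply Hi; simpl; auto).
      rewrite <- (Hbox g Hx). split; intros Hs v Xv; specialize (Hs v Xv);
      apply (nonmodal_truth g Hg X v); auto. }
  apply (proj1 (Htruth f Hd (incl_refl _))). apply Hv.
Qed.

Section Sem.
Context {W : Type} (V : nat -> W -> Prop).

Lemma sat_ext : forall f X X' w, (forall v, X v <-> X' v) -> (sat V f X w <-> sat V f X' w).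
Proof.
  induction f; simpl; intros X X' w HX.
  - tauto.
  - rewrite (IHf X X' w HX). tauto.
  - rewrite (IHf1 X X' w HX), (IHf2 X X' w HX). tauto.
  - split; intros H v Hv; [apply (IHf X X')|apply (IHf X X')]; auto; apply H; apply HX; auto.
  - assert (HY : forall v, (X v /\ sat V f1 X v) <-> (X' v /\ sat V f1 X' v)).
    { intros v. rewrite (IHf1 X X' v HX), HX. tauto. }
    split; intros H v Hv.
    + apply (IHf2 _ _ _ HY). apply H. apply HY; auto.
    + apply (IHf2 _ _ _ HY). apply H. apply HY; auto.
Qed.

Lemma nonmodal_indep : forall p, nonmodal p -> forall X Y w, sat V p X w <-> sat V p Y w.
Proof. induction p; simpl; intros H X Y w; try contradiction; try tauto.
  - rewrite (IHp H X Y w); tauto.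
  - destruct H. rewrite (IHp1 H X Y w), (IHp2 H0 X Y w); tauto. Qed.

Lemma sImp : forall a b X w, sat V (Imp a b) X w <-> (sat V a X w -> sat V b X w).
Proof. intros. unfold Imp; simpl. split; [intros H Ha; apply NNPP; tauto|tauto]. Qed.
Lemma sIff : forall a b X w, sat V (Iff a b) X w <-> (sat V a X w <-> sat V b X w).
Proof. intros. unfold Iff.
  change (sat V (And (Imp a b) (Imp b a)) X w) with (sat V (Imp a b) X w /\ sat V (Imp b a) X w).
  rewrite !sImp. tauto. Qed.
Lemma sOr : forall a b X w, sat V (Or a b) X w <-> (sat V a X w \/ sat V b X w).
Proof. intros. unfold Or; simpl. split; [intros H; apply NNPP; tauto|tauto]. Qed.
Lemma sDia : forall a X w, sat V (Dia a) X w <-> exists v, X v /\ sat V a X v.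
Proof. intros. unfold Dia; simpl. split.
  - intros H. apply NNPP. intros H2. apply H. intros v Hv Ha. apply H2. eauto.
  - intros [v [Hv Ha]] H. apply (H v Hv Ha). Qed.

Lemma taut_sound : forall p s X w, tautology p -> sat V (psubst s p) X w.
Proof.
  intros p s X w Ht.
  set (v := fun n => if excluded_middle_informative (sat V (s n) X w) then true else false).
  assert (E : forall q, peval v q = true <-> sat V (psubst s q) X w).
  { induction q; simpl.
    - unfold v. destruct (excluded_middle_informative _); split; auto; congruence.
    - rewrite <- IHq. destruct (peval v q); simpl; split; congruence.
    - rewrite <- IHq1, <- IHq2. rewrite andb_true_iff. tauto. }
  apply E, Ht.
Qed.

Lemma replace_sound : forall a b f f', (forall X w, sat V a X w <-> sat V b X w) ->
  replace a b f f' -> forall X w, sat V f X w <-> sat V f' X w.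
Proof.
  intros a b f f' Hab Hr. induction Hr; simpl; intros X w; auto.
  - rewrite IHHr; tauto.
  - rewrite IHHr; tauto.
  - rewrite IHHr; tauto.
  - split; intros H v Hv; [rewrite <- IHHr|rewrite IHHr]; auto.
  - assert (HY : forall v, (X v /\ sat V f X v) <-> (X v /\ sat V f' X v)).
    { intros v. rewrite IHHr. tauto. }
    split; intros H v Hv.
    + apply (sat_ext _ _ _ _ HY). apply H. apply HY; auto.
    + apply (sat_ext _ _ _ _ HY). apply H. apply HY; auto.
  - split; intros H v Hv; [rewrite <- IHHr|rewrite IHHr]; auto.
Qed.
End Sem.

Lemma soundness : forall f, yalcin f -> valid f.
Proof.
  intros f Hf; induction Hf; intros W V X w.
  - apply taut_sound; auto.
  - rewrite !sImp. cbn [sat]. intros H1 H2 v Hv. specialize (H1 v Hv). rewrite sImp in H1. auto.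
  - rewrite sImp, !sDia. intros [v [Hv H]]. rewrite sDia in H. destruct H as [u [Hu H]]. eauto.
  - rewrite sImp, sDia. intros [v [Hv H]]. exact H.
  - rewrite sIff. cbn [sat]. split.
    + intros Hc v Hv. rewrite sImp. intros Hf. specialize (Hc v (conj Hv Hf)).
      rewrite (nonmodal_indep V p H _ X) in Hc. exact Hc.
    + intros Hc v [Hv Hf]. specialize (Hc v Hv). rewrite sImp in Hc.
      rewrite (nonmodal_indep V p H _ X). auto.
  - rewrite sIff. cbn [sat]. split; [intros H; split; intros v Hv; apply H; auto|].
    intros [H1 H2] v Hv; split; auto.
  - rewrite sImp. cbn [sat]. intros H v Hv. rewrite sOr. left; auto.
  - rewrite sImp. cbn [sat]. intros H v Hv u Hu. auto.
  - rewrite sImp. cbn [sat]. intros [H1 H2] v Hv. specialize (H1 v Hv). rewrite sOr in H1.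
    destruct H1 as [H1|H1]; auto. cbn [sat] in H1. contradiction.
  - rewrite sImp. cbn [sat]. intros [H1 H2] v Hv. specialize (H1 v Hv). rewrite sOr in H1.
    destruct H1 as [H1|H1]; auto. rewrite sDia in H1. destruct H1 as [u [Hu Hb]].
    exfalso. exact (H2 u Hu Hb).
  - rewrite sImp. cbn [sat]. intros H v Hv. rewrite sDia.
    apply NNPP. intros H2. apply H. intros u Hu. apply NNPP. intros H3. apply H2.
    exists u; split; auto.
  - rewrite sIff. apply (replace_sound V a b); auto.
    intros X' w'. apply (proj1 (sIff V a b X' w')). apply IHHf.
  - specialize (IHHf1 W V X w). rewrite sImp in IHHf1. auto.
  - cbn [sat]. intros v Hv. apply IHHf.
Qed.

Lemma completeness : forall f, valid f -> yalcin f.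
Proof.
  intros f Hv. pose proof (red_correct f) as H.
  assert (Y : yalcin (red f)).
  { apply d1_complete; [apply d1_red|]. intros W V X w.
    pose proof (soundness _ H W V X w) as Hs. rewrite sIff in Hs. apply Hs, Hv. }
  apply (PL2 _ _ _ H Y); intros; bcase.
Qed.

Lemma sat_bigAnd : forall {W} (V : nat -> W -> Prop) l X w,
  sat V (bigAnd l) X w <-> (forall x, In x l -> sat V x X w).
Proof.
  intros W V l X w. induction l as [|a l IH].
  - simpl. split; [intros _ x []|intros _ [H1 H2]; auto].
  - destruct l as [|b l'].
    + simpl. split; [intros H x [<-|[]]; auto|intros H; auto].
    + change (sat V (And a (bigAnd (b :: l'))) X w <-> (forall x, In x (a :: b :: l') -> sat V x X w)).
      simpl sat at 1. rewrite IH. split.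
      * intros [H1 H2] x [<-|Hx]; auto.
      * intros H. split; [apply H; left; auto|intros x Hx; apply H; right; auto].
Qed.

Theorem theorem1 :
  (forall f : form, valid f <-> yalcin f) /\
  (forall (S : list form) (f : form),
      inf_cons S f <-> yalcin (Imp (bigAnd (map Box S)) (Box f))).
Proof.
  assert (P1 : forall f, valid f <-> yalcin f) by (split; [apply completeness|apply soundness]).
  split; [exact P1|]. intros S f. rewrite <- P1. split.
  - intros Hc W V X w. rewrite sImp, sat_bigAnd. intros H. simpl.
    apply (Hc W V X (inhabits w)).
    intros s Hs. intros v Hv. specialize (H (Box s) (in_map Box _ _ Hs)). simpl in H. auto.
  - intros Hv W V X [w] Hs. specialize (Hv W V X w). rewrite sImp, sat_bigAnd in Hv.
    intros v Hx. apply Hv; auto.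
    intros x Hx'. apply in_map_iff in Hx'. destruct Hx' as [s [<- Hs']]. simpl.
    apply Hs; auto.
Qed.
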